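(* Let $f:\mathcal X^n\to\mathcal T$ with $\mathcal T$ finite, let $\varepsilon>0$, and let $M$ be an $\varepsilon$-differentially private mechanism with values in $\mathcal T$. Then $$\inf_{x\in\mathcal X^n}\mathbb P(M(x)=f(x))\le \inf_{x\in\mathcal X^n}\frac{1}{\sum_{t\in\mathcal T}e^{-\mathrm{len}_f(x;t)\varepsilon}}.$$ If in addition $M$ is $L_{0,1}$-unbiased, where $L_{0,1}(s,t)=\mathbf 1\{s\neq t\}$, then for every $x\in\mathcal X^n$, $$\mathbb P(M(x)=f(x))\le \frac{1}{\sum_{t\in\mathcal T}e^{-2\,\mathrm{len}_f(x;t)\varepsilon}}.$$
   Context: For $x=(x_1,\dots,x_n),x'\in\mathcal X^n$, $d_H(x,x')=|\{i:x_i\neq x_i'\}|$ is the Hamming distance; $x,x'$ are neighboring if $d_H(x,x')\le 1$. A mechanism is a randomized map $M$ from $\mathcal X^n$ to a measurable space; $M$ is $(\varepsilon,\delta)$-differentially private if for all neighboring $x,x'$ and all measurable $S$, $\mathbb P(M(x)\in S)\le e^{\varepsilon}\mathbb P(M(x')\in S)+\delta$, and $\varepsilon$-differentially private if this holds with $\delta=0$. The inverse sensitivity is $\mathrm{len}_f(x;t)=\inf\{d_H(x,x'):x'\in\mathcal X^n,\ f(x')=t\}$, with $\inf\emptyset=+\infty$ and $e^{-\infty}=0$. For a loss $L:\mathcal T\times\mathcal T\to\mathbb R_+$, a mechanism $M$ is $L$-unbiased if $\mathbb E[L(M(x),f(x))]\le \mathbb E[L(M(x),t)]$ for all $x\in\mathcal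 X^n$ and $t\in\mathcal T$; for $L_{0,1}$ this means $\mathbb P(M(x)=f(x))\ge \mathbb P(M(x)=t)$ for all $t$. *)

(* Defs.v *)
From HB Require Import structures.
From mathcomp Require Import all_boot all_order all_algebra.
From mathcomp Require Import all_classical all_reals all_analysis.
Set Implicit Arguments. Unset Strict Implicit. Unset Printing Implicit Defensive.
Import Order.TTheory GRing.Theory Num.Theory.
Local Open Scope ring_scope.
Local Open Scope classical_set_scope.

Definition hamming (X : Type) (n : nat) (x x' : 'I_n -> X) : nat :=
  #|[set i : 'I_n | ~~ `[< x i = x' i >]]|.

(* A (randomized) mechanism with values in a finite type T is given by the
   probability mass function M x t = P(M(x) = t). *)
Definition is_mechanism (R : realType) (X : Type) (n : nat) (T : finType)
  (M : ('I_n -> X) -> T -> R) : Prop :=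
  forall x, (forall t, 0 <= M x t) /\ \sum_(t : T) M x t = 1.

(* eps-differential privacy (delta = 0); on a finite T every subset is measurable. *)
Definition is_dp (R : realType) (X : Type) (n : nat) (T : finType)
  (eps : R) (M : ('I_n -> X) -> T -> R) : Prop :=
  forall x x', (hamming x x' <= 1)%N ->
    forall S : {set T}, \sum_(t in S) M x t <= expR eps * \sum_(t in S) M x' t.

(* inverse sensitivity len_f(x;t) as an extended real (+oo if t not in range) *)
Definition len_f (R : realType) (X : Type) (n : nat) (T : Type)
  (f : ('I_n -> X) -> T) (x : 'I_n -> X) (t : T) : \bar R :=
  ereal_inf [set ((hamming x x')%:R)%:E | x' in [set x' | f x' = t]].

(* e^{- l * c}, with e^{-oo} = 0 *)
Definition exp_neg_len (R : realType) (c : R) (l : \bar R) : R :=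
  match l with
  | r%:E => expR (- (r * c))
  | _ => 0
  end.

Definition is_unbiased (R : realType) (X : Type) (n : nat) (T : finType)
  (L : T -> T -> R) (f : ('I_n -> X) -> T) (M : ('I_n -> X) -> T -> R) : Prop :=
  forall x t, \sum_(s : T) M x s * L s (f x) <= \sum_(s : T) M x s * L s t.

Definition L01 (R : realType) (T : eqType) (s t : T) : R :=
  if s != t then 1 else 0.

(* Main.v *)
Require Import Defs.
From HB Require Import structures.
From mathcomp Require Import all_boot all_order all_algebra.
From mathcomp Require Import all_classical all_reals all_analysis.
From mathcomp Require Import ring.
Import Order.TTheory GRing.Theory Num.Theory.
Local Open Scope ring_scope.
Set Implicit Arguments. Unset Strict Implicit.
Definition hset (X : Type) (n : nat) (x x' : 'I_n -> X) : {set 'I_n} :=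
  [set i | ~~ `[< x i = x' i >]].
Lemma hammingE (X : Type) (n : nat) (x x' : 'I_n -> X) :
  hamming x x' = #|hset x x'|.
Proof.
rewrite /hamming /hset; apply: eq_card => i; rewrite inE.
by apply/idP/idP => [/set_mem //|h]; apply: mem_set.
Qed.



Lemma hamming_sym (X : Type) (n : nat) (x x' : 'I_n -> X) :
  hamming x x' = hamming x' x.
Proof.
rewrite !hammingE; apply: eq_card => i; rewrite !inE.
by rewrite (asbool_equiv_eq (P := x i = x' i) (Q := x' i = x i)) //; split.
Qed.

Lemma hamming0 (X : Type) (n : nat) (x : 'I_n -> X) : hamming x x = 0%N.
Proof.
rewrite hammingE; apply/eqP; rewrite cards_eq0; apply/eqP/setP => i.
by rewrite !inE asboolT.
Qed.

Lemma hamming0_eq (X : Type) (n : nat) (x x' : 'I_n -> X) :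
  hamming x x' = 0%N -> x = x'.
Proof.
rewrite hammingE => /eqP; rewrite cards_eq0 => /eqP h.
apply: funext => i; apply: contrapT => hne.
have : i \in hset x x' by rewrite inE; apply/negP => /asboolP.
by rewrite h inE.
Qed.

Lemma hamming_step (X : Type) (n : nat) (x x' : 'I_n -> X) k :
  hamming x x' = k.+1 -> exists y, hamming x y = 1%N /\ hamming y x' = k.
Proof.
rewrite hammingE => hk.
have : (0 < #|hset x x'|)%N by rewrite hk.
case/card_gt0P => i hi.
have hne : x i <> x' i by move: hi; rewrite inE => /negP hh h; apply: hh; apply/asboolP.
exists (fun j => if j == i then x' i else x j); split.
  rewrite hammingE -(cards1 i); congr (#|pred_of_set _|).
  apply/setP => j; rewrite !inE; case: (eqVneq j i) => [->|nji].
    by apply/negP => /asboolP.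
  by rewrite asboolT.
have <- : #|hset x x' :\ i| = k by move: hk; rewrite (cardsD1 i) hi add1n => -[].
rewrite hammingE; congr (#|pred_of_set _|); apply/setP => j; rewrite !inE.
case: (eqVneq j i) => [->|nji] /=; first by rewrite asboolT.
by [].
Qed.

Lemma group_dp (R : realType) (X : Type) (n : nat) (T : finType)
  (eps : R) (M : ('I_n -> X) -> T -> R) :
  is_mechanism M -> is_dp eps M ->
  forall k x x', hamming x x' = k -> forall t,
  M x t <= expR (k%:R * eps) * M x' t.
Proof.
move=> hM hdp; elim=> [|k IH] x x' hk t.
  by rewrite (hamming0_eq hk) mul0r expR0 mul1r.
have [y [h1 h2]] := hamming_step hk.
have := hdp x y (eq_leq h1) [set t]; rewrite !big_set1 => hxy.
apply: (le_trans hxy).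
rewrite -[k.+1]addn1 natrD mulrDl mul1r addrC expRD -mulrA.
by apply: ler_wpM2l; [exact: expR_ge0 | exact: IH].
Qed.

Local Open Scope classical_set_scope.

Lemma len_cases (R : realType) (X : Type) (n : nat) (T : Type)
  (f : ('I_n -> X) -> T) (x : 'I_n -> X) (t : T) :
  @len_f R _ _ _ f x t = +oo%E \/
  exists x', f x' = t /\ @len_f R _ _ _ f x t = ((hamming x x')%:R)%:E.
Proof.
case: (pselect (exists x', f x' = t)) => [ex|nex]; last first.
  left; rewrite /len_f.
  have -> : [set ((hamming x x')%:R)%:E | x' in [set x' | f x' = t]] = set0 :> set (\bar R).
    apply/seteqP; split => // y [x' hx' _]; apply: nex; by exists x'.
  exact: ereal_inf0.
right.
have exP : exists k, (fun k => `[< exists x', f x' = t /\ hamming x x' = k >]) k.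
  case: ex => x' hx'; exists (hamming x x'); apply/asboolP; by exists x'.
have [m hPm hmin] := find_ex_minn exP.
move: hPm => /= /asboolP [x' [hx' hm]].
exists x'; split => //; apply/le_anti/andP; split.
  apply: ereal_inf_lbound; by exists x'.
apply: le_ereal_inf_tmp => _ [y hy <-]; rewrite lee_fin ler_nat hm.
apply: hmin; apply/asboolP; by exists y.
Qed.

Lemma len_self (R : realType) (X : Type) (n : nat) (T : Type)
  (f : ('I_n -> X) -> T) (x : 'I_n -> X) :
  @len_f R _ _ _ f x (f x) = 0%E.
Proof.
apply/le_anti/andP; split.
  apply: ereal_inf_lbound; exists x => //; by rewrite hamming0.
apply: le_ereal_inf_tmp => _ [y hy <-]; by rewrite lee_fin ler0n.
Qed.

Lemma exp_neg_len_ge0 (R : realType) (c : R) l : 0 <= exp_neg_len c l.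
Proof. case: l => [r| |] /=; by [exact: expR_ge0 | ]. Qed.

Lemma sum_bound (R : realType) (X : Type) (n : nat) (T : finType)
  (f : ('I_n -> X) -> T) (M : ('I_n -> X) -> T -> R) (c r : R) x0 :
  is_mechanism M ->
  (forall t, r * exp_neg_len c (@len_f R _ _ _ f x0 t) <= M x0 t) ->
  r <= 1 / \sum_(t : T) exp_neg_len c (@len_f R _ _ _ f x0 t).
Proof.
move=> hM hb.
have hS1 : 1 <= \sum_(t : T) exp_neg_len c (@len_f R _ _ _ f x0 t).
  rewrite (bigD1 (f x0)) //= len_self /= mul0r oppr0 expR0 lerDl.
  apply: sumr_ge0 => t _; exact: exp_neg_len_ge0.
have hS : 0 < \sum_(t : T) exp_neg_len c (@len_f R _ _ _ f x0 t).
  exact: lt_le_trans ltr01 hS1.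
rewrite ler_pdivlMr // mulr_sumr -(hM x0).2.
by apply: ler_sum => t _.
Qed.

Lemma sumL01 (R : realType) (X : Type) (n : nat) (T : finType)
  (M : ('I_n -> X) -> T -> R) x u :
  is_mechanism M -> \sum_(s : T) M x s * @L01 R T s u = 1 - M x u.
Proof.
move=> hM; have := (hM x).2; rewrite (bigD1 u) //= => h1.
rewrite (bigD1 u) //= /L01 eqxx mulr0 add0r.
rewrite (eq_bigr (fun s => M x s)); last by move=> s ->; rewrite mulr1.
by rewrite -h1 addrAC subrr add0r.
Qed.

Theorem proposition2p1 (R : realType) (X : Type) (n : nat) (T : finType)
  (f : ('I_n -> X) -> T) (eps : R) (M : ('I_n -> X) -> T -> R) :
  0 < eps -> is_mechanism M -> is_dp eps M ->
  (ereal_inf [set (M x (f x))%:E | x in [set: 'I_n -> X]]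
     <= ereal_inf [set (1 / \sum_(t : T) exp_neg_len eps (@len_f R _ _ _ f x t))%:E
                  | x in [set: 'I_n -> X]])%E
  /\
  (is_unbiased (@L01 R T) f M ->
   forall x : 'I_n -> X,
     M x (f x) <= 1 / \sum_(t : T) exp_neg_len (2 * eps) (@len_f R _ _ _ f x t)).
Proof.
move=> heps hM hdp; split.
  set A := [set (M x (f x))%:E | x in [set: 'I_n -> X]].
  have hlb : forall x, (ereal_inf A <= (M x (f x))%:E)%E.
    move=> x; apply: ereal_inf_lbound; by exists x.
  case hA : (ereal_inf A) => [r| |]; last by rewrite leNye.
    apply: le_ereal_inf_tmp => _ [x0 _ <-]; rewrite lee_fin.
    have hr : forall x, r <= M x (f x).
      by move=> x; have := hlb x; rewrite hA lee_fin.
    apply: (sum_bound hM) => t.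
    case: (len_cases R f x0 t) => [->|[x' [hx' ->]]] /=.
      by rewrite mulr0; exact: (hM x0).1.
    rewrite expRN ler_pdivrMr ?expR_gt0 // mulrC.
    apply: le_trans (hr x') _; rewrite hx'.
    apply: (group_dp hM hdp); exact: hamming_sym.
  apply: le_ereal_inf_tmp => y [x0 _ _].
  by have := hlb x0; rewrite hA leye_eq.
move=> hub x.
have hmode : forall y t, M y t <= M y (f y).
  move=> y t; have := hub y t; rewrite !(sumL01 _ _ hM).
  by rewrite lerD2l lerN2.
apply: (sum_bound hM) => t.
case: (len_cases R f x t) => [->|[x' [hx' ->]]] /=.
  by rewrite mulr0; exact: (hM x).1.
rewrite expRN ler_pdivrMr ?expR_gt0 //.
set h := (hamming x x')%:R.
have -> : h * (2 * eps) = h * eps + h * eps by ring.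
rewrite expRD.
apply: le_trans (group_dp hM hdp (erefl _) (f x)) _.
rewrite [_ * (_ * _)]mulrC -mulrA; apply: ler_wpM2l; first exact: expR_ge0.
apply: le_trans (_ : M x' t <= _).
  by rewrite -hx'; exact: hmode.
rewrite /h; exact: (group_dp hM hdp (hamming_sym x' x)).
Qed.
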